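(* Let $\mathcal{C}\le \mathbb{F}_q^n$ be a linear code with one-variable weight enumerator $W_\mathcal{C}(x)$ and homogeneous weight enumerator $W_\mathcal{C}(x,y)$. Then the stabilizer $\mathrm{Stab}_{\mathrm{GL}_2(\mathbb{C})}(W_\mathcal{C}(x,y))$ is finite if and only if $W_\mathcal{C}(x)$ has at least $3$ distinct roots in $\overline{\mathbb{Z}}$ (the algebraic integers; equivalently, at least $3$ distinct complex roots, since $W_\mathcal{C}(x)$ is a monic integer polynomial).
   Context: A linear code is a subspace $\mathcal{C}\le\mathbb{F}_q^n$; the weight $\mathrm{wt}(c)$ of $c\in\mathcal{C}$ is the number of nonzero coordinates. The one-variable weight enumerator is $W_\mathcal{C}(x)=\sum_{c\in\mathcal{C}}x^{n-\mathrm{wt}(c)}$ and the homogeneous weight enumerator is $W_\mathcal{C}(x,y)=\sum_{c\in\mathcal{C}}x^{n-\mathrm{wt}(c)}y^{\mathrm{wt}(c)}$. The group $\mathrm{GL}_2(\mathbb{C})$ acts on $\mathbb{C}[x,y]$ by $A\cdot p(x,y)=p(ax+by,cx+dy)$ for $A=\begin{pmatrix}a&b\\c&d\end{pmatrix}$, and $\mathrm{Stab}_{\mathrm{GL}_2(\mathbb{C})}(p)=\{A: A\cdot p=p\}$. *)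

(* Defs.v *)
From HB Require Import structures.
From mathcomp Require Import all_boot all_algebra all_field.
From mathcomp Require Import Rstruct.
From mathcomp Require Import complex.
From mathcomp Require Import mpoly.

Set Implicit Arguments.
Unset Strict Implicit.
Unset Printing Implicit Defensive.

Import GRing.Theory.
Local Open Scope ring_scope.

Definition CC := complex Rdefinitions.R.

Definition wt (F : finFieldType) (n : nat) (c : 'rV[F]_n) : nat :=
  #|[set i : 'I_n | c ord0 i != 0]|.

Definition wenum1 (R : nzRingType) (F : finFieldType) (n : nat)
  (C : {vspace 'rV[F]_n}) : {poly R} :=
  \sum_(c : 'rV[F]_n | c \in C) 'X^(n - wt c).

Definition wenum2 (R : nzRingType) (F : finFieldType) (n : nat)
  (C : {vspace 'rV[F]_n}) : {mpoly R[2]} :=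
  \sum_(c : 'rV[F]_n | c \in C) ('X_0 ^+ (n - wt c) * 'X_1 ^+ (wt c)).

Definition gl2_act (A : 'M[CC]_2) (p : {mpoly CC[2]}) : {mpoly CC[2]} :=
  p \mPo [tuple (A ord0 ord0) *: 'X_0 + (A ord0 ord_max) *: 'X_1;
                (A ord_max ord0) *: 'X_0 + (A ord_max ord_max) *: 'X_1].

Definition in_stab (p : {mpoly CC[2]}) (A : 'M[CC]_2) : Prop :=
  A \in unitmx /\ gl2_act A p = p.

Definition stab_finite (p : {mpoly CC[2]}) : Prop :=
  exists s : seq 'M[CC]_2, forall A, in_stab p A -> A \in s.

(* Main.v *)
Require Import Defs.
From HB Require Import structures.
From mathcomp Require Import all_boot all_algebra all_field.
From mathcomp Require Import Rstruct complex mpoly.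
From mathcomp Require Import ring zify.
From Stdlib Require Import Classical.
Set Implicit Arguments. Unset Strict Implicit. Unset Printing Implicit Defensive.
Import GRing.Theory Num.Theory.
Local Open Scope ring_scope.

Lemma det2 (R : comNzRingType) (A : 'M[R]_2) :
  \det A = A ord0 ord0 * A ord_max ord_max - A ord0 ord_max * A ord_max ord0.
Proof.
rewrite (expand_det_row _ ord0) !big_ord_recl big_ord0 addr0 /cofactor.
rewrite !det_mx11 !mxE /=.
have -> : lift ord0 ord0 = (ord_max : 'I_2) by apply/val_inj.
idtac.
rewrite /= expr0 expr1 mul1r mulN1r.

have -> : lift (ord_max : 'I_2) 0 = ord0 by apply/val_inj.
by rewrite mulrN.
Qed.

Section Code.
Variables (F : finFieldType) (n : nat) (C : {vspace 'rV[F]_n}).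

Lemma wt_le (c : 'rV[F]_n) : (wt c <= n)%N.
Proof. by rewrite /wt; apply: leq_trans (max_card _) _; rewrite card_ord. Qed.

Lemma wt_eq0 (c : 'rV[F]_n) : (wt c == 0)%N = (c == 0).
Proof.
rewrite /wt cards_eq0; apply/eqP/eqP => [H|->].
  apply/matrixP => i j; rewrite ord1 mxE.
  have : j \notin [set i0 : 'I_n | c ord0 i0 != 0] by rewrite H in_set0.
  by rewrite inE negbK => /eqP.
by apply/setP => j; rewrite !inE mxE eqxx.
Qed.

Lemma wenum1_split (R : nzRingType) : wenum1 R C =
  'X^n + \sum_(c : 'rV[F]_n | (c \in C) && (c != 0)) 'X^(n - wt c).
Proof.
rewrite /wenum1 (bigD1 0) ?mem0v //=.
have /eqP -> : (wt (0 : 'rV[F]_n) == 0)%N by rewrite wt_eq0.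
by rewrite subn0.
Qed.

Lemma size_wenum1_rest (R : nzRingType) :
  (size (\sum_(c : 'rV[F]_n | (c \in C) && (c != 0)) ('X^(n - wt c) : {poly R}))%R <= n)%N.
Proof.
apply: leq_trans (size_sum _ _ _) _.
apply/bigmax_leqP => c /andP[_ nz]; rewrite size_polyXn.
have := wt_le c; have : (wt c != 0)%N by rewrite wt_eq0.
move=> H1 H2; lia.
Qed.

Lemma wenum1_monic (R : nzRingType) : wenum1 R C \is monic.
Proof.
rewrite wenum1_split monicE lead_coefDl ?lead_coefXn //.
by rewrite size_polyXn ltnS size_wenum1_rest.
Qed.

Lemma size_wenum1 (R : nzRingType) : size (wenum1 R C) = n.+1.
Proof.
by rewrite wenum1_split size_addl ?size_polyXn // ltnS size_wenum1_rest.
Qed.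

Lemma wenum1_map (K : numFieldType) :
  wenum1 K C = map_poly (ratr : rat -> K) (wenum1 rat C).
Proof.
rewrite /wenum1 raddf_sum; apply: eq_bigr => c _.
by symmetry; apply: map_polyXn.
Qed.

End Code.
Lemma root_sqfree (K : numFieldType) (Q : {poly K}) (z : K) :
  Q != 0 -> root (Q %/ gcdp Q Q^`()) z = root Q z.
Proof.
move=> Q0; set G := gcdp Q Q^`(); set S := Q %/ G.
have QE : S * G = Q by rewrite /S divpK // dvdp_gcdl.
apply/idP/idP => [r|rQ]; first by rewrite -QE rootM r.
apply/negPn/negP => nS.
have [m [R nR QR]] := multiplicity_XsubC Q z.
move: nR; rewrite Q0 /= => nR.
have m0 : (0 < m)%N.
  case: m QR => // QR; move: rQ; rewrite QR expr0 mulr1 => rR.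
  by rewrite rR in nR.
have cop : coprimep (('X - z%:P) ^+ m) S.
  by apply: coprimep_expl; rewrite coprimep_sym coprimep_XsubC.
have h1 : ('X - z%:P) ^+ m %| G.
  by rewrite -(Gauss_dvdpr G cop) QE QR dvdp_mull.
have h2 : ('X - z%:P) ^+ m %| Q^`() by apply: dvdp_trans h1 (dvdp_gcdr _ _).
have D : Q^`() = ('X - z%:P) ^+ m.-1 * (R^`() * ('X - z%:P) + R *+ m).
  rewrite QR derivM deriv_exp derivXsubC mul1r.
  rewrite mulrDr mulrnAr; congr (_ + _).
    by rewrite mulrCA -exprSr prednK // mulrC.
  by rewrite mulrC mulrnAr.
have E : ('X - z%:P) ^+ m = ('X - z%:P) ^+ m.-1 * ('X - z%:P).
  by rewrite -exprSr prednK.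
move: h2; rewrite D E dvdp_mul2l; last by rewrite expf_neq0 // polyXsubC_eq0.
rewrite dvdp_XsubCl /root !hornerE subrr mulr0 add0r hornerMn mulrn_eq0.
case/orP => [/eqP m00|]; first by rewrite m00 in m0.
by move: nR; rewrite /root => /negPf ->.
Qed.

Definition three_roots (K : fieldType) (p : {poly K}) :=
  exists z1 z2 z3 : K, [/\ [/\ root p z1, root p z2 & root p z3] &
                          [/\ z1 != z2, z1 != z3 & z2 != z3]].

Lemma three_roots_crit (K : numClosedFieldType) (q : {poly rat}) : q != 0 ->
  three_roots (map_poly (ratr : rat -> K) q) <-> (3 < size (q %/ gcdp q q^`())%R)%N.
Proof.
move=> q0; set Q := map_poly _ q.
have Q0 : Q != 0 by rewrite map_poly_eq0.
have ME : map_poly (ratr : rat -> K) (q %/ gcdp q q^`()) = Q %/ gcdp Q Q^`().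
  by rewrite map_divp gcdp_map deriv_map.
have S0 : q %/ gcdp q q^`() != 0.
  apply: contraNneq q0 => S0; rewrite -(divpK (dvdp_gcdl q q^`())) S0 mul0r //.
rewrite -(size_map_poly (ratr : {rmorphism rat -> K})) ME.
split.
  move=> [z1 [z2 [z3 [[r1 r2 r3] [d12 d13 d23]]]]].
  have := @max_poly_roots _ (Q %/ gcdp Q Q^`()) [:: z1; z2; z3].
  rewrite -ME map_poly_eq0 S0 /= ME !root_sqfree // r1 r2 r3 /= !inE.
  by rewrite negb_or d12 d13 d23 => /(_ isT isT isT).
set T := Q %/ gcdp Q Q^`() => sT.
have sepT : separable_poly T by rewrite /T make_separable.
have [zs Ezs] := closed_field_poly_normal T.
have lc0 : lead_coef T != 0.
  by rewrite lead_coef_eq0 -size_poly_gt0; apply: leq_trans sT.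
have uzs : uniq zs.
  by rewrite -separable_prod_XsubC -(eqp_separable (eqp_scale _ lc0)) -Ezs.
have rT z : z \in zs -> root Q z.
  by move=> zin; rewrite -root_sqfree // -/T Ezs rootZ // root_prod_XsubC.
move: sT uzs rT; rewrite Ezs size_scale // size_prod_XsubC.
case: zs {Ezs} => [|z1 [|z2 [|z3 zs]]] //= _.
rewrite !inE !negb_or => /and4P[/and3P[d12 d13 _] /andP[d23 _] _ _] rT.
exists z1, z2, z3; split; last by rewrite d12 d13 d23.
by split; apply: rT; rewrite !inE eqxx ?orbT.
Qed.
Lemma poly_eq0_all (K : numFieldType) (p : {poly K}) :
  (forall x, p.[x] = 0) -> p = 0.
Proof.
move=> H; apply/eqP/negPn/negP => p0.
set rs := [seq (i%:R : K) | i <- iota 0 (size p)].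
have a : all (root p) rs by apply/allP => x _; rewrite /root H.
have u : uniq rs.
  by rewrite map_inj_uniq ?iota_uniq // => i j /eqP; rewrite eqr_nat => /eqP.
by have := max_poly_roots p0 a u; rewrite size_map size_iota ltnn.
Qed.

Definition ev2 (K : Type) (x y : K) : 'I_2 -> K :=
  fun i => if val i == 0%N then x else y.

Lemma mnm2_eq (m1 m2 : 'X_{1..2}) :
  (m1 == m2) = (m1 ord0 == m2 ord0) && (m1 ord_max == m2 ord_max).
Proof.
apply/eqP/andP => [->|[/eqP h0 /eqP h1]]; first by rewrite !eqxx.
apply/mnmP => -[[|[|//]]] Hi.
  by have -> : Ordinal Hi = ord0 by apply/val_inj.
by have -> : Ordinal Hi = ord_max by apply/val_inj.
Qed.

Lemma meval2 (K : comNzRingType) (Q : {mpoly K[2]}) x y :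
  Q.@[ev2 x y] = \sum_(m <- msupp Q) Q@_m * (x ^+ m ord0 * y ^+ m ord_max).
Proof.
rewrite mevalE; apply: eq_bigr => m _; congr (_ * _).
rewrite !big_ord_recl big_ord0 mulr1 /ev2 /=.
by have -> : lift ord0 (ord0 : 'I_1) = ord_max by apply/val_inj.
Qed.

Lemma mpoly2_eq0 (K : numFieldType) (Q : {mpoly K[2]}) :
  (forall x y, Q.@[ev2 x y] = 0) -> Q = 0.
Proof.
move=> H; apply/mpolyP => m; rewrite mcoeff0.
have H1 y : \sum_(m' <- msupp Q | m' ord0 == m ord0) Q@_m' * y ^+ m' ord_max = 0.
  pose f := \sum_(m' <- msupp Q) (Q@_m' * y ^+ m' ord_max) *: 'X^(m' ord0).
  have f0 : f = 0.
    apply: poly_eq0_all => x; rewrite -(H x y) meval2 /f horner_sum.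
    apply: eq_bigr => m' _; rewrite hornerZ hornerXn; ring.
  have := congr1 (fun p : {poly K} => p`_(m ord0)) f0.
  by rewrite /f coef_sumMXn coef0 big_mkcondr /=.
pose g := \sum_(m' <- msupp Q | m' ord0 == m ord0) Q@_m' *: 'X^(m' ord_max).
have g0 : g = 0.
  apply: poly_eq0_all => y; rewrite -(H1 y) /g horner_sum.
  by apply: eq_bigr => m' _; rewrite hornerZ hornerXn.
have := congr1 (fun p : {poly K} => p`_(m ord_max)) g0.
rewrite /g coef_sumMXn coef0.
under eq_bigl => m' do rewrite -mnm2_eq.
case: (boolP (m \in msupp Q)) => [mi|/memN_msupp_eq0 //].
rewrite big_mkcond (bigD1_seq m) ?msupp_uniq //= eqxx big1 ?addr0 // => i /negPf -> //.
Qed.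

Lemma prod_const_seq (R : comNzRingType) (T : Type) (s : seq T) (c : R) :
  \prod_(r <- s) c = c ^+ size s.
Proof. by elim: s => [|r s IH]; rewrite ?big_nil ?big_cons ?IH ?exprS. Qed.

Lemma eval_act (A : 'M[CC]_2) (P : {mpoly CC[2]}) x y :
  (gl2_act A P).@[ev2 x y] =
  P.@[ev2 (A ord0 ord0 * x + A ord0 ord_max * y)
          (A ord_max ord0 * x + A ord_max ord_max * y)].
Proof.
rewrite /gl2_act comp_mpoly_meval; apply: meval_eq => -[[|[|//]]] Hi.
  by rewrite /= mevalD !mevalZ !mevalXU.
by rewrite /= mevalD !mevalZ !mevalXU.
Qed.

Definition Fp (rs : seq CC) (u v : CC) := \prod_(r <- rs) (u - r * v).

Section Bridge.
Variables (F : finFieldType) (n : nat) (C : {vspace 'rV[F]_n}).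
Variable rs : seq CC.
Hypothesis Hrs : wenum1 CC C = \prod_(r <- rs) ('X - r%:P).

Lemma size_rs : size rs = n.
Proof.
by have := @size_wenum1 F n C CC; rewrite Hrs size_prod_XsubC => -[].
Qed.

Lemma eval_wenum2 x y : (wenum2 CC C).@[ev2 x y] = Fp rs x y.
Proof.
rewrite /wenum2 raddf_sum /=.
under eq_bigr => c _ do rewrite mevalM !rmorphXn /= !mevalXU /=.
have [->|y0] := eqVneq y 0.
  rewrite /Fp (bigD1 0) ?mem0v //=.
  have /eqP -> : (wt (0 : 'rV[F]_n) == 0)%N by rewrite wt_eq0.
  rewrite big1 => [|c /andP[_ nz]]; last first.
    by rewrite expr0n; move: nz; rewrite -wt_eq0 => /negPf ->; rewrite mulr0.
  under eq_bigr => r _ do rewrite mulr0 subr0.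
  by rewrite prod_const_seq size_rs subn0 expr0 mulr1 addr0.
have E1 : (wenum1 CC C).[x / y] = \prod_(r <- rs) (x / y - r).
  by rewrite Hrs horner_prod; apply: eq_bigr => r _; rewrite hornerXsubC.
have E2 : y ^+ n * (wenum1 CC C).[x / y] =
          \sum_(c | c \in C) x ^+ (n - wt c) * y ^+ wt c.
  rewrite /wenum1 horner_sum mulr_sumr; apply: eq_bigr => c _.
  rewrite hornerXn.
  have -> : y ^+ n = y ^+ (n - wt c) * y ^+ wt c by rewrite -exprD subnK // wt_le.
  by rewrite mulrAC expr_div_n mulrCA mulfV ?expf_neq0 // mulr1.
rewrite -E2 E1 -size_rs -prod_const_seq -big_split /Fp /=.
by apply: eq_bigr => r _; rewrite mulrBr mulrCA divff // mulr1 mulrC.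
Qed.

End Bridge.

Lemma ord2P (i : 'I_2) : i = ord0 \/ i = ord_max.
Proof.
case: i => -[|[|//]] Hi; [left|right]; exact/val_inj.
Qed.

Lemma Fp_hom rs (g x y : CC) : Fp rs (g * x) (g * y) = g ^+ size rs * Fp rs x y.
Proof.
rewrite /Fp -prod_const_seq -big_split /=; apply: eq_bigr => r _; ring.
Qed.

Lemma Fp_0 rs (x : CC) : Fp rs x 0 = x ^+ size rs.
Proof.
by rewrite /Fp -prod_const_seq; apply: eq_bigr => r _; rewrite mulr0 subr0.
Qed.

Lemma fix3 (r e q w1 w2 w3 : CC) : w1 != w2 -> w1 != w3 -> w2 != w3 ->
  r * w1 ^+ 2 + e * w1 + q = 0 -> r * w2 ^+ 2 + e * w2 + q = 0 ->
  r * w3 ^+ 2 + e * w3 + q = 0 -> [/\ r = 0, e = 0 & q = 0].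
Proof.
move=> d12 d13 d23 E1 E2 E3.
have h12 : (w1 - w2) * (r * (w1 + w2) + e) =
  (r * w1 ^+ 2 + e * w1 + q) - (r * w2 ^+ 2 + e * w2 + q) by ring.
have h13 : (w1 - w3) * (r * (w1 + w3) + e) =
  (r * w1 ^+ 2 + e * w1 + q) - (r * w3 ^+ 2 + e * w3 + q) by ring.
rewrite E1 E2 subrr in h12; rewrite E1 E3 subrr in h13.
move/eqP: h12; rewrite mulf_eq0 subr_eq0 (negPf d12) /= => /eqP h12.
move/eqP: h13; rewrite mulf_eq0 subr_eq0 (negPf d13) /= => /eqP h13.
have h : r * (w2 - w3) = (r * (w1 + w2) + e) - (r * (w1 + w3) + e) by ring.
rewrite h12 h13 subrr in h.
move/eqP: h; rewrite mulf_eq0 subr_eq0 (negPf d23) orbF => /eqP r0.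
move: h12; rewrite r0 mul0r add0r => e0.
by move: E1; rewrite r0 e0 !mul0r !add0r => q0.
Qed.

Section Finite.
Variable rs : seq CC.

Definition stabF (A : 'M[CC]_2) := \det A != 0 /\
  forall u v, Fp rs (A ord0 ord0 * u + A ord0 ord_max * v)
                    (A ord_max ord0 * u + A ord_max ord_max * v) = Fp rs u v.

Definition img (A : 'M[CC]_2) z :=
  (A ord0 ord0 * z + A ord0 ord_max) / (A ord_max ord0 * z + A ord_max ord_max).

Lemma stab_img A z : stabF A -> z \in rs ->
  A ord_max ord0 * z + A ord_max ord_max != 0 /\ img A z \in rs.
Proof.
move=> [dA H] zin.
have Fz : Fp rs z 1 = 0.
  by rewrite /Fp (big_rem z) //= mulr1 subrr mul0r.
move: (H z 1); rewrite Fz !mulr1.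
set al := A ord0 ord0 * z + _; set be := A ord_max ord0 * z + _ => F0.
have be0 : be != 0.
  apply/eqP => be0; move: F0; rewrite be0 Fp_0 => /eqP; rewrite expf_eq0.
  move=> /andP[_ /eqP al0]; move: dA; rewrite det2.
  have -> : A ord0 ord_max = - (A ord0 ord0 * z).
    by apply/eqP; rewrite -addr_eq0 addrC -/al al0.
  have -> : A ord_max ord_max = - (A ord_max ord0 * z).
    by apply/eqP; rewrite -addr_eq0 addrC -/be be0.
  by rewrite mulrN mulNr opprK => /eqP; apply; ring.
split => //.
move/eqP: F0; rewrite /Fp prodf_seq_eq0 => /hasP[r rin /eqP].
move/eqP; rewrite subr_eq0 => /eqP hal; rewrite /img -/al -/be hal mulfK //.
Qed.

Lemma stab_unique A B z1 z2 z3 :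
  z1 \in rs -> z2 \in rs -> z3 \in rs -> z1 != z2 -> z1 != z3 -> z2 != z3 ->
  stabF A -> stabF B -> img A z1 = img B z1 -> img A z2 = img B z2 ->
  img A z3 = img B z3 -> exists g : CC, g ^+ size rs = 1 /\ A = g *: B.
Proof.
move=> i1 i2 i3 d12 d13 d23 sA sB e1 e2 e3.
set a := A ord0 ord0; set b := A ord0 ord_max; set c := A ord_max ord0;
set d := A ord_max ord_max.
set a' := B ord0 ord0; set b' := B ord0 ord_max; set c' := B ord_max ord0;
set d' := B ord_max ord_max.
have dB : a' * d' - b' * c' != 0 by rewrite -det2; case: sB.
set p := a * d' - b * c'; set q := b * a' - a * b'.
set r := c * d' - d * c'; set s := d * a' - c * b'.
have key z : z \in rs -> img A z = img B z ->
    r * (img B z) ^+ 2 + (s - p) * img B z + - q = 0.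
  move=> zi eAB.
  have [al0 _] := stab_img sA zi; have [be0 _] := stab_img sB zi.
  move: al0 be0; rewrite -/a -/b -/c -/d -/a' -/b' -/c' -/d' => al0 be0.
  set w := img B z.
  have hwB : (c' * z + d') * w = a' * z + b' by rewrite /w /img mulrC divfK.
  have hwA : (c * z + d) * w = a * z + b.
    by rewrite /w -eAB /img -/a -/b -/c -/d mulrC divfK.
  have E1 : (c' * z + d') * (p * w + q) = (a' * d' - b' * c') * (a * z + b).
    have -> : (c' * z + d') * (p * w + q) = p * ((c' * z + d') * w) + q * (c' * z + d') by ring.
    by rewrite hwB /p /q; ring.
  have E2 : (c' * z + d') * (r * w + s) = (a' * d' - b' * c') * (c * z + d).
    have -> : (c' * z + d') * (r * w + s) = r * ((c' * z + d') * w) + s * (c' * z + d') by ring.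
    by rewrite hwB /r /s; ring.
  have E3 : p * w + q = w * (r * w + s).
    apply: (mulfI be0); rewrite E1 mulrCA E2 -hwA; ring.
  have -> : r * w ^+ 2 + (s - p) * w + - q = w * (r * w + s) - (p * w + q) by ring.
  by rewrite -E3 subrr.
have [i1' _] := stab_img sB i1; have [i2' _] := stab_img sB i2;
have [i3' _] := stab_img sB i3.
have inj w1 w2 : w1 \in rs -> w2 \in rs -> w1 != w2 -> img B w1 != img B w2.
  move=> wi1 wi2 dw; apply: contra dw => /eqP ew.
  have [b1 _] := stab_img sB wi1; have [b2 _] := stab_img sB wi2.
  move: b1 b2 ew; rewrite /img -/a' -/b' -/c' -/d' => b1 b2 /eqP.
  rewrite eqr_div // => /eqP ew; apply/eqP.
  have : (w1 - w2) * (a' * d' - b' * c') = 0.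
    by rewrite -[RHS](subrr ((a' * w1 + b') * (c' * w2 + d'))) {2}ew; ring.
  by move/eqP; rewrite mulf_eq0 (negPf dB) orbF subr_eq0 => /eqP.
have [r0 sp q0] := fix3 (inj _ _ i1 i2 d12) (inj _ _ i1 i3 d13)
  (inj _ _ i2 i3 d23) (key _ i1 e1) (key _ i2 e2) (key _ i3 e3).
move/eqP: sp; rewrite subr_eq0 => /eqP sp; move/eqP: q0; rewrite oppr_eq0 => /eqP q0.
set g := p / (a' * d' - b' * c').
have AgB : A = g *: B.
  apply/matrixP => i j; rewrite mxE.
  have ea : a * (a' * d' - b' * c') = p * a' + q * c' by rewrite /p /q; ring.
  have eb : b * (a' * d' - b' * c') = p * b' + q * d' by rewrite /p /q; ring.
  have ec : c * (a' * d' - b' * c') = r * a' + s * c' by rewrite /r /s; ring.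
  have ed : d * (a' * d' - b' * c') = r * b' + s * d' by rewrite /r /s; ring.
  rewrite q0 !mul0r !addr0 in ea eb; rewrite r0 sp !mul0r !add0r in ec ed.
  have fin x y : x * (a' * d' - b' * c') = p * y -> x = g * y.
    by move=> h; rewrite /g mulrAC -h mulfK.
  case: (ord2P i) => ->; case: (ord2P j) => ->.
  - exact: (fin _ _ ea).
  - exact: (fin _ _ eb).
  - exact: (fin _ _ ec).
  - exact: (fin _ _ ed).
exists g; split => //.
case: sA => _ HA; case: sB => _ HB.
have := HA 1 0; rewrite AgB !mxE !mulr1 !mulr0 !addr0 Fp_hom.
have := HB 1 0; rewrite !mulr1 !mulr0 !addr0 => ->; rewrite Fp_0 expr1n mulr1.
by [].
Qed.

End Finite.

Lemma unity_list (N : nat) : (0 < N)%N ->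
  exists us : seq CC, forall g : CC, g ^+ N = 1 -> g \in us.
Proof.
move=> N0; have [us Eus] := closed_field_poly_normal ('X^N - 1 : {poly CC}).
exists us => g gN.
have : root ('X^N - 1) g by rewrite /root !hornerE gN subrr.
rewrite Eus; have /monicP -> := monic_Xn_sub_1 CC N0.
by rewrite scale1r root_prod_XsubC.
Qed.

Lemma finite_stab rs z1 z2 z3 :
  z1 \in rs -> z2 \in rs -> z3 \in rs -> z1 != z2 -> z1 != z3 -> z2 != z3 ->
  exists s : seq 'M[CC]_2, forall A, stabF rs A -> A \in s.
Proof.
move=> i1 i2 i3 d12 d13 d23.
have [us Hus] : exists us : seq CC, forall g : CC, g ^+ size rs = 1 -> g \in us.
  by apply: unity_list; case: rs i1 {i2 i3}.
pose key A := (img A z1, (img A z2, img A z3)).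
pose T := [seq (x, yz) | x <- rs, yz <- [seq (y, z) | y <- rs, z <- rs]].
have HT A : stabF rs A -> key A \in T.
  move=> sA; have [_ j1] := stab_img sA i1; have [_ j2] := stab_img sA i2.
  have [_ j3] := stab_img sA i3.
  by rewrite /key /T allpairs_f // allpairs_f.
suff [s Hs] : exists s : seq 'M[CC]_2,
    forall A, stabF rs A -> key A \in T -> A \in s.
  by exists s => A sA; apply: Hs => //; apply: HT.
elim: T {HT} => [|t T [s IH]]; first by exists [::].
case: (classic (exists B, stabF rs B /\ key B = t)) => [[B [sB kB]]|nB].
  exists ([seq g *: B | g <- us] ++ s) => A sA; rewrite inE => /orP[/eqP kA|kA].
    rewrite -kB in kA; case: kA => e1 e2 e3.
    have [g [gN ->]] := stab_unique i1 i2 i3 d12 d13 d23 sA sB e1 e2 e3.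
    by rewrite mem_cat; apply/orP; left; apply/mapP; exists g => //; apply: Hus.
  by rewrite mem_cat IH ?orbT.
exists s => A sA; rewrite inE => /orP[/eqP kA|kA]; last exact: IH.
by exfalso; apply: nB; exists A.
Qed.

Definition mat22 (x00 x01 x10 x11 : CC) : 'M[CC]_2 :=
  \matrix_(i < 2, j < 2) if val i == 0%N then (if val j == 0%N then x00 else x01)
                         else (if val j == 0%N then x10 else x11).

Definition famM (a b lam mu : CC) : 'M[CC]_2 :=
  let x10 := (lam - mu) / (b - a) in
  let x11 := (mu * b - lam * a) / (b - a) in
  mat22 (lam + a * x10) (- lam * a + a * x11) x10 x11.

Lemma prod_ifa (rs : seq CC) (a lam mu : CC) :
  \prod_(r <- rs) (if r == a then lam else mu) =
  lam ^+ count (pred1 a) rs * mu ^+ count (predC1 a) rs.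
Proof.
elim: rs => [|r s IH]; first by rewrite big_nil !expr0 mulr1.
rewrite big_cons IH /=; case: (r == a) => /=; rewrite ?exprS; ring.
Qed.

Lemma family_stab rs (a b lam mu : CC) : a != b ->
  all (fun r => (r == a) || (r == b)) rs -> lam != 0 -> mu != 0 ->
  lam ^+ count (pred1 a) rs * mu ^+ count (predC1 a) rs = 1 ->
  stabF rs (famM a b lam mu).
Proof.
move=> ab Hr l0 m0 prodH.
have ba : b - a != 0 by rewrite subr_eq0 eq_sym.
split.
  rewrite det2 /famM !mxE /=.
  have -> : (lam + a * ((lam - mu) / (b - a))) * ((mu * b - lam * a) / (b - a)) -
    (- lam * a + a * ((mu * b - lam * a) / (b - a))) * ((lam - mu) / (b - a)) =
    lam * mu by field.
  by rewrite mulf_neq0.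
move=> u v; rewrite /famM !mxE /= /Fp.
rewrite -prod_ifa in prodH.
transitivity ((\prod_(r <- rs) (if r == a then lam else mu)) *
   \prod_(r <- rs) (u - r * v)); last by rewrite prodH mul1r.
rewrite -big_split /=.
apply: eq_big_seq => r rin.
have /orP[/eqP ->|/eqP ->] := allP Hr r rin.
  rewrite eqxx; field; exact: ba.
rewrite eq_sym (negPf ab); field; exact: ba.
Qed.

Lemma famM_mu (a b lam mu : CC) : a != b ->
  famM a b lam mu ord0 ord0 - b * famM a b lam mu ord_max ord0 = mu.
Proof.
move=> ab; have ba : b - a != 0 by rewrite subr_eq0 eq_sym.
rewrite /famM !mxE /=; field; exact: ba.
Qed.

Lemma inj_notin (T : eqType) (f : nat -> T) (s : seq T) :
  injective f -> exists k, f k \notin s.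
Proof.
move=> fi; set L := [seq f k | k <- iota 0 (size s).+1].
have uL : uniq L by rewrite map_inj_uniq ?iota_uniq.
have : ~~ all (mem s) L.
  apply/negP => /allP aL; have := uniq_leq_size uL aL.
  by rewrite size_map size_iota ltnn.
case/allPn => x /mapP[k _ ->] nk; by exists k.
Qed.

Lemma infinite_family rs (a b : CC) : a != b ->
  all (fun r => (r == a) || (r == b)) rs -> (rs = [::] \/ a \in rs) ->
  ~ exists s : seq 'M[CC]_2, forall A, stabF rs A -> A \in s.
Proof.
move=> ab Hr Ha [s Hs].
set i := count (pred1 a) rs; set j := count (predC1 a) rs.
set i0 := maxn 1 i.
have i00 : (0 < i0)%N by rewrite leq_max.
pose t (k : nat) : CC := (k.+1)%:R.
have t0 k : t k != 0 by rewrite pnatr_eq0.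
pose f k := famM a b (t k ^+ j) (t k ^- i0).
have fS k : stabF rs (f k).
  apply: family_stab => //; rewrite ?expf_neq0 ?invr_eq0 ?expf_neq0 //.
  case: Ha => [rs0|ain].
    by rewrite /i /j rs0 /= !expr0 mulr1.
  have ip : (0 < i)%N by rewrite /i -has_count has_pred1.
  have -> : i0 = i by rewrite /i0; apply/maxn_idPr.
  by rewrite exprVn -!exprM mulnC mulfV // expf_neq0.
have fi : injective f.
  move=> k1 k2 e; have := famM_mu (t k1 ^+ j) (t k1 ^- i0) ab.
  rewrite -/(f k1) e famM_mu // => /invr_inj /eqP.
  rewrite /t -!natrX eqr_nat => /eqP /(expIn i00) [].
  by [].
have [k nk] := inj_notin s fi.
by move: nk; rewrite Hs.
Qed.

Section Main.
Variables (F : finFieldType) (n : nat) (C : {vspace 'rV[F]_n}).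
Variable rs : seq CC.
Hypothesis Hrs : wenum1 CC C = \prod_(r <- rs) ('X - r%:P).

Lemma in_stab_iff A : in_stab (wenum2 CC C) A <-> stabF rs A.
Proof.
split.
  move=> [uA eA]; split; first by rewrite -unitfE -unitmxE.
  move=> u v; have := congr1 (meval (ev2 u v)) eA.
  by rewrite /= eval_act !(eval_wenum2 Hrs).
move=> [dA H]; split; first by rewrite unitmxE unitfE.
apply/eqP; rewrite -subr_eq0; apply/eqP; apply: mpoly2_eq0 => x y.
by rewrite mevalB eval_act !(eval_wenum2 Hrs) H subrr.
Qed.

End Main.

Lemma three_roots_prod (rs : seq CC) :
  three_roots (\prod_(r <- rs) ('X - r%:P)) <->
  exists z1 z2 z3, [/\ [/\ z1 \in rs, z2 \in rs & z3 \in rs] &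
                      [/\ z1 != z2, z1 != z3 & z2 != z3]].
Proof.
by split => -[z1 [z2 [z3 [[r1 r2 r3] d]]]]; exists z1, z2, z3;
  move: r1 r2 r3; rewrite !root_prod_XsubC.
Qed.

Lemma transfer (F : finFieldType) (n : nat) (C : {vspace 'rV[F]_n}) :
  three_roots (wenum1 algC C) <-> three_roots (wenum1 CC C).
Proof.
have q0 : wenum1 rat C != 0 by apply: monic_neq0; apply: wenum1_monic.
rewrite (@wenum1_map F n C algC) (@wenum1_map F n C CC).
by rewrite (three_roots_crit algC q0) (three_roots_crit CC q0).
Qed.

Unset Implicit Arguments.
Theorem theorem4p2 (F : finFieldType) (n : nat) (C : {vspace 'rV[F]_n}) :
  stab_finite (wenum2 CC C) <->
  exists z1 z2 z3 : algC,
    [/\ [/\ z1 \in Aint, z2 \in Aint & z3 \in Aint],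
        [/\ root (wenum1 algC C) z1, root (wenum1 algC C) z2
          & root (wenum1 algC C) z3] &
        [/\ z1 != z2, z1 != z3 & z2 != z3]].
Proof.
have [rs Ers] := closed_field_poly_normal (wenum1 CC C).
have Hrs : wenum1 CC C = \prod_(r <- rs) ('X - r%:P).
  by rewrite {1}Ers; have /monicP -> := @wenum1_monic F n C CC; rewrite scale1r.
have RHS_iff : (exists z1 z2 z3 : algC,
    [/\ [/\ z1 \in Aint, z2 \in Aint & z3 \in Aint],
        [/\ root (wenum1 algC C) z1, root (wenum1 algC C) z2
          & root (wenum1 algC C) z3] &
        [/\ z1 != z2, z1 != z3 & z2 != z3]]) <-> three_roots (wenum1 algC C).
  split; first by move=> [z1 [z2 [z3 [_ r d]]]]; exists z1, z2, z3.
  move=> [z1 [z2 [z3 [[r1 r2 r3] d]]]]; exists z1, z2, z3; split => //.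
  have mo := @wenum1_monic F n C algC.
  have po : wenum1 algC C \is a polyOver Num.int.
    rewrite /wenum1; apply/polyOverP => i; rewrite coef_sum; apply: rpred_sum => c _.
    by rewrite coefXn; apply: rpred_nat.
  by split; apply: (root_monic_Aint _ mo po).
rewrite RHS_iff transfer Hrs three_roots_prod.
split.
  move=> [s Hs]; apply: NNPP => N3.
  have Hs' : exists s : seq 'M[CC]_2, forall A, stabF rs A -> A \in s.
    by exists s => A /(in_stab_iff Hrs A) /Hs.
  clear Hs; case: rs Hrs N3 Hs' Ers => [|a rs'] Hrs' N3 Hs' _.
    by apply: (@infinite_family [::] 0 1) => //; [rewrite eq_sym oner_eq0 | left].
  set rs := a :: rs' in Hrs' N3 Hs'.
  case: (classic (exists b, b \in rs /\ b != a)) => [[b [bin ba]]|nb].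
    apply: (@infinite_family rs a b) => //; last by right; rewrite inE eqxx.
      by rewrite eq_sym.
    apply/allP => r rin; apply/negPn/negP; rewrite negb_or => /andP[ra rb].
    apply: N3; exists a, b, r; split; first by rewrite inE eqxx.
    by rewrite eq_sym ba eq_sym ra eq_sym rb.
  apply: (@infinite_family rs a (a + 1)) => //; last by right; rewrite inE eqxx.
    by rewrite -subr_eq0 opprD addrA subrr add0r oppr_eq0 oner_eq0.
  apply/allP => r rin; apply/orP; left; apply/negPn/negP => ra.
  by apply: nb; exists r; split.
move=> [z1 [z2 [z3 [[i1 i2 i3] [d12 d13 d23]]]]].
have [s Hs] := finite_stab i1 i2 i3 d12 d13 d23.
by exists s => A /(in_stab_iff Hrs A) /Hs.
Qed.
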